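(* Let $\Sigma^*$ be an $n\times n$ positive definite matrix with $\Omega^*=(\Sigma^* )^{-1}$ whose conditional independence structure is a tree $T^*$, and suppose that for every leaf $a$ of $T^*$ with neighbor $b$ we have $\Omega^*_{aa}>|\Omega^*_{ab}|$. Let $D^*$ be a diagonal matrix with nonnegative entries and $\Sigma^o=\Sigma^*+D^*$. Let $\Sigma^o=\Sigma'+D'$ where $\Sigma'$ is positive definite with conditional independence structure a tree $T'$, $D'$ is diagonal with nonnegative entries, and $\Omega'=(\Sigma')^{-1}$ satisfies $\Omega'_{aa}>|\Omega'_{ab}|$ for every leaf $a$ of $T'$ with neighbor $b$ in $T'$. Then $T'=T^*$.
   Context: For an $n\times n$ positive definite matrix $\Sigma$ with inverse $\Omega$, its conditional independence structure is the graph on $\{1,\dots,n\}$ with an edge $\{i,j\}$ ($i\neq j$) iff $\Omega_{ij}\neq 0$. *)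

(* Defs.v *)
From mathcomp Require Import all_boot all_order all_algebra.
Set Implicit Arguments. Unset Strict Implicit. Unset Printing Implicit Defensive.
Import Order.TTheory GRing.Theory Num.Theory.
Local Open Scope ring_scope.

Definition posdef (R : realFieldType) (n : nat) (S : 'M[R]_n) : Prop :=
  S^T = S /\ forall x : 'cV[R]_n, x != 0 -> 0 < (x^T *m S *m x) ord0 ord0.

Definition ci_graph (R : realFieldType) (n : nat) (S : 'M[R]_n) : rel 'I_n :=
  fun i j => (i != j) && (invmx S i j != 0).

Definition is_connected (T : finType) (e : rel T) : Prop :=
  forall x y : T, connect e x y.
Definition is_acyclic (T : finType) (e : rel T) : Prop :=
  ~ exists s : seq T, [&& (2 < size s)%N, uniq s & cycle e s].
Definition is_tree (T : finType) (e : rel T) : Prop :=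
  is_connected e /\ is_acyclic e.

Definition is_leaf (T : finType) (e : rel T) (a : T) : Prop :=
  #|[set b | e a b]| = 1%N.

Definition leaf_condition (R : realFieldType) (n : nat) (S : 'M[R]_n) : Prop :=
  forall a b : 'I_n, is_leaf (ci_graph S) a -> ci_graph S a b ->
    `|invmx S a b| < invmx S a a.

Definition nonneg_diag (R : realFieldType) (n : nat) (D : 'M[R]_n) : Prop :=
  is_diag_mx D /\ forall i : 'I_n, 0 <= D i i.

(* Main.v *)
Require Import Defs.
From mathcomp Require Import all_boot all_order all_algebra.
From mathcomp Require Import ring lra.
Set Implicit Arguments. Unset Strict Implicit. Unset Printing Implicit Defensive.
Import Order.TTheory GRing.Theory Num.Theory.
Local Open Scope ring_scope.

Definition rm (T : finType) (e : rel T) (v : T) : rel T :=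
  fun a b => [&& e a b, a != v & b != v].
Definition rme (T : finType) (e : rel T) (u v : T) : rel T :=
  fun a b => e a b && ~~ [&& (a == u) || (a == v) & (b == u) || (b == v)].

Lemma rm_sym (T : finType) (e : rel T) v : symmetric e -> symmetric (rm e v).
Proof. by move=> s a b; rewrite /rm s; case: (a != v); case: (b != v); rewrite ?andbF. Qed.

Lemma rme_sym (T : finType) (e : rel T) u v : symmetric e -> symmetric (rme e u v).
Proof. by move=> s a b; rewrite /rme s; congr (_ && ~~ _); apply: andbC. Qed.

Lemma acyc_edge (T : finType) (e : rel T) u v : irreflexive e -> is_acyclic e ->
  e u v -> ~~ connect (rme e u v) v u.
Proof.
move=> irr ac euv; apply/negP => /connectP [p pth lst].
case/shortenP: pth lst => p' pth' uq _ lst.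
apply: ac; exists (v :: p').
have pe : path e v p' by apply: sub_path pth' => a b /andP[].
move: pth' uq lst pe; case: p' => [|w [|w' q]] /=.
- by move=> _ _ uv; move: euv; rewrite uv irr.
- by move=> /andP[/andP[_ h] _] _ uw _; move: h; rewrite -uw !eqxx !orbT.
- move=> _ -> lst /andP[evw /andP[eww' pq]].
  by rewrite evw eww' /= rcons_path pq /= -lst euv.
Qed.

Lemma nbr_exists (T : finType) (e : rel T) x v : connect e x v -> x != v ->
  exists2 m, e m v & connect (rm e v) x m.
Proof.
case/connectP => p; elim: p x => [|y p IH] x /=; first by move=> _ ->; rewrite eqxx.
move=> /andP[exy pth] lst xv; case: (eqVneq y v) => [yv|yv].
  by exists x; [rewrite -yv | apply: connect0].
have [m emv cym] := IH y pth lst yv; exists m => //.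
by apply: connect_trans cym; apply: connect1; rewrite /rm exy xv yv.
Qed.

Lemma rm_avoid (T : finType) (e : rel T) v x y : connect (rm e v) x y -> x != v -> y != v.
Proof.
case/connectP => p; elim: p x => [|z p IH] x /=; first by move=> _ ->.
by move=> /andP[/and3P[_ _ zv] pth] lst _; apply: IH pth lst zv.
Qed.

Lemma uniq_nbr (T : finType) (e : rel T) v x m y : symmetric e -> irreflexive e ->
  is_acyclic e -> e v m -> connect (rm e v) x m -> connect (rm e v) x y -> y != m ->
  ~~ connect (rm e m) v y.
Proof.
move=> s irr ac evm cxm cxy ym; apply/negP => cvy.
have cym : connect (rm e v) y m.
  by rewrite (sym_connect_sym (rm_sym v s)) in cxy; apply: connect_trans cxy cxm.
have : connect (rme e v m) v m.
  apply: (connect_trans (y := y)).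
    apply: connect_sub cvy => a b /and3P[eab am bm]; apply: connect1.
    rewrite /rme eab /=; apply/negP => /andP[].
    rewrite (negbTE am) (negbTE bm) !orbF => /eqP ea /eqP eb.
    by move: eab; rewrite ea eb irr.
  apply: connect_sub cym => a b /and3P[eab av bv]; apply: connect1.
  rewrite /rme eab /=; apply/negP => /andP[].
  rewrite (negbTE av) (negbTE bv) /= => /eqP ea /eqP eb.
  by move: eab; rewrite ea eb irr.
by rewrite (sym_connect_sym (rme_sym v m s)); apply/negP; apply: acyc_edge.
Qed.

Lemma comp_mono (T : finType) (e : rel T) m k i z : ~~ connect (rm e m) i k ->
  connect (rm e m) i z -> connect (rm e k) i z.
Proof.
move=> nik /connectP[p pth ->]; apply/connectP; exists p => //.
apply: (sub_in_path (P := [pred y | connect (rm e m) i y])) (pth); last first.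
  by apply/allP => y yin; rewrite inE; apply: (path_connect pth); exact: yin.
  move=> a b; rewrite !inE => ca cb /and3P[eab _ _]; rewrite /rm eab /=.
  by apply/andP; split; apply/eqP => ak; move: nik; rewrite -ak ?ca ?cb.
Qed.

Section Mx.
Variable (R : realFieldType) (n : nat) (S : 'M[R]_n).
Hypothesis PD : posdef S.

Lemma qf (x : 'cV[R]_n) (A : 'M[R]_n) :
  (x^T *m A *m x) ord0 ord0 = \sum_j (\sum_i x i ord0 * A i j) * x j ord0.
Proof.
rewrite mxE; apply: eq_bigr => j _; congr (_ * _); rewrite mxE.
by apply: eq_bigr => i _; rewrite mxE.
Qed.

Lemma sum2 (F : 'I_n -> R) k l a b :
  \sum_i (a * (i == k)%:R + b * (i == l)%:R) * F i = a * F k + b * F l.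
Proof.
have s1 : forall c, \sum_i (i == c)%:R * F i = F c.
  move=> c; rewrite (bigD1 c) //= eqxx mul1r big1 ?addr0 // => i /negbTE ->.
  by rewrite mul0r.
rewrite -(s1 k) -(s1 l) !mulr_sumr -big_split /=; apply: eq_bigr => i _.
by rewrite mulrDl !mulrA.
Qed.

Definition e2 k l a b : 'cV[R]_n := \col_i (a * (i == k)%:R + b * (i == l)%:R).

Lemma qf_e2 (A : 'M[R]_n) k l a b :
  ((e2 k l a b)^T *m A *m e2 k l a b) ord0 ord0 =
  a * (a * A k k + b * A l k) + b * (a * A k l + b * A l l).
Proof.
rewrite qf.
under eq_bigr => j _ do rewrite mulrC mxE.
rewrite sum2.
congr (a * _ + b * _).
  by under eq_bigr => i _ do rewrite mxE; rewrite sum2.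
by under eq_bigr => i _ do rewrite mxE; rewrite sum2.
Qed.

Lemma e2_neq0 k l a b : a * (l == k)%:R + b != 0 -> e2 k l a b != 0.
Proof.
move=> h; apply/negP => /eqP e0; move: h.
have := congr1 (fun M : 'cV[R]_n => M l ord0) e0; rewrite !mxE eqxx mulr1 => ->.
by rewrite eqxx.
Qed.

Lemma Ssym i j : S i j = S j i.
Proof. by have := congr1 (fun M : 'M[R]_n => M j i) PD.1; rewrite mxE. Qed.

Lemma Sdiag k : 0 < S k k.
Proof.
have h : 1 * (k == k)%:R + 0 != 0 :> R by rewrite eqxx addr0 mul1r oner_neq0.
have := PD.2 _ (e2_neq0 h).
by rewrite qf_e2 !mul1r !mul0r !addr0.
Qed.

Lemma S2x2 k l : k != l -> S k l ^+ 2 < S k k * S l l.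
Proof.
move=> kl; have dk := Sdiag k.
have h0 : S k l * (l == k)%:R + - S k k != 0.
  by rewrite (eq_sym l k) (negbTE kl) mulr0 add0r oppr_eq0 gt_eqF.
have := PD.2 _ (e2_neq0 h0).
rewrite qf_e2 (Ssym l k) => h.
have h2 : 0 < S k k * (S k k * S l l - S k l ^+ 2).
  by apply: (lt_le_trans h); rewrite le_eqVlt; apply/orP; left; apply/eqP; ring.
rewrite -subr_gt0; by rewrite pmulr_rgt0 in h2.
Qed.

Lemma Sunit : S \in unitmx.
Proof.
rewrite unitmxE unitfE; apply/negP => /det0P [v v0 vS].
have := PD.2 v^T; rewrite trmx_eq0 => /(_ v0).
by rewrite trmxK vS mul0mx mxE ltxx.
Qed.

Local Notation W := (invmx S).

Lemma WS : W *m S = 1%:M.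
Proof. exact: mulVmx Sunit. Qed.
Lemma SW : S *m W = 1%:M.
Proof. exact: mulmxV Sunit. Qed.

Lemma WSe a b : \sum_c W a c * S c b = (a == b)%:R.
Proof. by have := congr1 (fun M : 'M[R]_n => M a b) WS; rewrite !mxE. Qed.

Lemma Wsym i j : W i j = W j i.
Proof.
have h : W^T = W by rewrite trmx_inv PD.1.
by have := congr1 (fun M : 'M[R]_n => M j i) h; rewrite mxE.
Qed.

Lemma Wpd (x : 'cV[R]_n) : x != 0 -> 0 < (x^T *m W *m x) ord0 ord0.
Proof.
move=> x0; set y := W *m x.
have xe : x = S *m y by rewrite /y mulmxA SW mul1mx.
have y0 : y != 0 by apply: contraNneq x0 => y0; rewrite xe y0 mulmx0.
have -> : x^T *m W *m x = y^T *m S *m y.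
  rewrite {1 2}xe trmx_mul PD.1 -!mulmxA (mulmxA W S y) WS mul1mx.
  by rewrite mulmxA.
exact: PD.2.
Qed.

Lemma Wdiag k : 0 < W k k.
Proof.
have h : 1 * (k == k)%:R + 0 != 0 :> R by rewrite eqxx addr0 mul1r oner_neq0.
have := Wpd (e2_neq0 h).
by rewrite qf_e2 !mul1r !mul0r !addr0.
Qed.

Lemma markov (A : {set 'I_n}) i j k : i \in A -> j \notin A -> k \notin A ->
  (forall a c, a \in A -> c \notin A -> c != k -> W a c = 0) ->
  S i j * S k k = S i k * S k j.
Proof.
move=> iA jA kA hW.
set v := \col_c (if c \in A then S c j * S k k - S c k * S k j else 0) : 'cV[R]_n.
suff v0 : v = 0.
  have := congr1 (fun M : 'cV[R]_n => M i ord0) v0; rewrite !mxE iA.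
  by move/eqP; rewrite subr_eq0 => /eqP.
apply/eqP; apply: contraT => vn0; have := Wpd vn0.
rewrite qf big1 ?ltxx // => a _.
rewrite [v a ord0]mxE; case: ifP => aA; last by rewrite mulr0.
suff -> : \sum_c v c ord0 * W c a = 0 by rewrite mul0r.
transitivity (\sum_c W a c * (S c j * S k k - S c k * S k j)).
  apply: eq_bigr => c _; rewrite mxE (Wsym c a); case: ifP => cA.
    by rewrite mulrC.
  rewrite mul0r; case: (eqVneq c k) => [->|ck].
    by rewrite (mulrC (S k k)) subrr mulr0.
  by rewrite (hW a c aA (negbT cA) ck) mul0r.
under eq_bigr => c _ do rewrite mulrBr !mulrA.
rewrite sumrB -!mulr_suml !WSe.
have -> : (a == j) = false by apply/negP => /eqP aj; move: jA; rewrite -aj aA.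
have -> : (a == k) = false by apply/negP => /eqP ak; move: kA; rewrite -ak aA.
by rewrite !mul0r subrr.
Qed.

End Mx.

Lemma helper2 (R : realFieldType) (p d s a D : R) : 0 < d -> 0 < s -> p * d = a ^+ 2 * s -> a ^+ 2 < D * d -> p < D * s.
Proof. move=> d0 s0 e h. rewrite -(ltr_pM2r d0) e.
have -> : D * s * d = (D * d) * s by ring.
by rewrite ltr_pM2r. Qed.
Lemma helper1 (R : realFieldType) (p q d s a D : R) : 0 < d -> 0 < s -> p * d ^+ 2 = a ^+ 2 * q -> q <= d * s -> a ^+ 2 < D * d -> p < D * s.
Proof. move=> d0 s0 e hq h. have d2 : 0 < d ^+ 2 by rewrite exprn_gt0.
rewrite -(ltr_pM2r d2) e. apply: (le_lt_trans (ler_wpM2l (sqr_ge0 a) hq)).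
have -> : D * s * d ^+ 2 = (D * d) * (d * s) by ring.
by rewrite ltr_pM2r ?mulr_gt0. Qed.

Definition valid n (k i j : 'I_n) := [&& i != j, i != k & j != k].
Definition gq (R : realFieldType) n (M : 'M[R]_n) k i j := `|M i k * M k j / M i j|.
Definition IsMax (R : realFieldType) n (M : 'M[R]_n) k x :=
  (exists i j, valid k i j /\ x = gq M k i j) /\
  (forall i j, valid k i j -> gq M k i j <= x).
Definition DL (R : realFieldType) n (M : 'M[R]_n) k :=
  exists j, j != k /\ exists x y, [/\ IsMax M k x, IsMax M j y, x * y = M k j ^+ 2 & x < y].
Definition Qm (R : realFieldType) n (M : 'M[R]_n) k i j :=
  forall p q, valid k p q -> gq M k p q <= gq M k i j.

Lemma IsMax_uniq (R : realFieldType) n (M : 'M[R]_n) k x y :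
  IsMax M k x -> IsMax M k y -> x = y.
Proof.
move=> [[i [j [v ->]]] hx] [[p [q [w ->]]] hy].
by apply/le_anti; rewrite hy // hx.
Qed.

Section Tree.
Variable (R : realFieldType) (n : nat) (S : 'M[R]_n).
Hypothesis PD : posdef S.
Hypothesis TR : is_tree (ci_graph S).
Hypothesis LC : leaf_condition S.

Local Notation G := (ci_graph S).
Local Notation W := (invmx S).
Definition comp (v x : 'I_n) := [set y | connect (rm G v) x y].

Lemma compE v x y : (y \in comp v x) = connect (rm G v) x y.
Proof. by rewrite inE. Qed.

Lemma Gsym : symmetric G.
Proof. by move=> a b; rewrite /ci_graph eq_sym (Wsym PD). Qed.
Lemma Girr : irreflexive G.
Proof. by move=> a; rewrite /ci_graph eqxx. Qed.
Let Gac := TR.2.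
Let Gconn := TR.1.

Lemma comp_sym k i j : (j \in comp k i) = (i \in comp k j).
Proof. by rewrite !compE (sym_connect_sym (rm_sym k Gsym)). Qed.

Lemma comp_self k i : i \in comp k i.
Proof. by rewrite compE connect0. Qed.

Lemma comp_nk k i : i != k -> k \notin comp k i.
Proof. by move=> ik; rewrite compE; apply/negP => c; have := rm_avoid c ik; rewrite eqxx. Qed.

Lemma sepM i j k : i != k -> j \notin comp k i -> S i j * S k k = S i k * S k j.
Proof.
move=> ik jn; apply: (markov PD (A := comp k i)) => //.
- exact: comp_self.
- exact: comp_nk.
move=> a c aA cA ck; apply/eqP; apply: contraR (cA) => Wac.
rewrite compE in aA; rewrite compE; apply: (connect_trans aA); apply: connect1.
rewrite /rm /ci_graph Wac ck (rm_avoid aA ik) !andbT.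
by apply/eqP => ac; move: cA; rewrite -ac compE aA.
Qed.

Lemma nz_adj i j : G i j -> S i j != 0.
Proof.
move=> Gij; have ij : i != j by apply/eqP => e; move: Gij; rewrite e Girr.
apply/negP => /eqP s0.
have h : forall x, x != j -> W i x * S x j = 0.
  move=> x xj; case: (eqVneq x i) => [->|xi]; first by rewrite s0 mulr0.
  case: (eqVneq (W i x) 0) => [->|Wix]; first by rewrite mul0r.
  have Gix : G i x by rewrite /ci_graph eq_sym xi Wix.
  have jn : j \notin comp i x.
    rewrite compE; apply/negP => jc.
    have := uniq_nbr Gsym Girr Gac Gij jc (connect0 _ x) xj.
    by rewrite connect1 // /rm Gix ij.
  have := sepM xi jn; rewrite (Ssym PD x i) s0 mulr0 => /eqP.
  by rewrite mulf_eq0 (gt_eqF (Sdiag PD i)) orbF => /eqP ->; rewrite mulr0.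
have := WSe PD i j; rewrite (negbTE ij) (bigD1 j) //= big1 ?addr0.
  by move/eqP; rewrite mulf_eq0 (gt_eqF (Sdiag PD j)) orbF; move: Gij => /andP[_ /negbTE ->].
by move=> x xj; apply: h.
Qed.

Lemma nz i j : i != j -> S i j != 0.
Proof.
move: {2}#|comp j i|.+1 (ltnSn #|comp j i|) => N.
elim: N i j => // N IH i j cN ij.
have [m Gmj cim] := nbr_exists (Gconn i j) ij.
case: (eqVneq m i) => [mi|mi]; first by apply: nz_adj; rewrite -mi.
have Gjm : G j m by rewrite Gsym.
have sep : ~~ connect (rm G m) j i.
  by apply: (uniq_nbr Gsym Girr Gac Gjm cim (connect0 _ i)); rewrite eq_sym.
have jm : j != m by apply/eqP => e; move: Gjm; rewrite e Girr.
have := sepM (i := j) (j := i) jm; rewrite compE => /(_ sep) e.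
have nim : ~~ connect (rm G m) i j by rewrite (sym_connect_sym (rm_sym m Gsym)).
have lt : (#|comp m i| < #|comp j i|)%N.
  apply: proper_card; apply/properP; split.
    by apply/subsetP => z; rewrite !compE; apply: comp_mono.
  exists m; [by rewrite compE | by apply: comp_nk; rewrite eq_sym].
have sim : S i m != 0 by apply: IH; [apply: leq_trans lt _ | rewrite eq_sym].
have sjm := nz_adj Gjm.
rewrite (Ssym PD); apply/eqP => s0; move: e; rewrite s0 mul0r => /esym/eqP.
by rewrite mulf_eq0 (negbTE sjm) (Ssym PD m i) (negbTE sim).
Qed.


Lemma bound N k i j : (#|comp k i| < N)%N -> i != j -> i != k -> j != k ->
  (`|S i k * S k j| <= S k k * `|S i j|) /\ (j \in comp k i -> `|S i k * S k j| < S k k * `|S i j|).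
Proof.
elim: N k i j => // N IH k i j cN ij ik jk.
have dk := Sdiag PD k.
have nij : 0 < `|S i j| by rewrite normr_gt0 nz.
case: (boolP (j \in comp k i)) => jc; last first.
  have e := sepM ik jc.
  by split => //; rewrite -e normrM (ger0_norm (ltW dk)) [X in _ <= X]mulrC.
suff st : `|S i k * S k j| < S k k * `|S i j| by split; [apply: ltW | move=> _].
have [m Gmk cim] := nbr_exists (Gconn i k) ik.
have km : k != m by apply/eqP => e; move: Gmk; rewrite e Girr.
have Gkm : G k m by rewrite Gsym.
have sepy : forall y, y \in comp k i -> y != m -> S k y * S m m = S k m * S m y.
  move=> y yc ym; apply: sepM km _; rewrite compE.
  rewrite compE in yc; exact: (uniq_nbr Gsym Girr Gac Gkm cim yc ym).
have skm := S2x2 PD km.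
have dm := Sdiag PD m.
case: (eqVneq m i) => [mi|mi].
  subst m.
  have e := sepy j jc (ltac:(by rewrite eq_sym)).
  apply: (helper2 dm nij _ skm).
  rewrite -[S i i]ger0_norm ?ltW // -normrM -mulrA e (Ssym PD i k) mulrA -expr2.
  by rewrite normrM (ger0_norm (sqr_ge0 _)).
case: (eqVneq m j) => [mj|mj].
  subst m.
  have e := sepy i (comp_self k i) (ltac:(by rewrite ij)).
  apply: (helper2 dm nij _ skm).
  rewrite -[S j j]ger0_norm ?ltW // -normrM (Ssym PD i k) -mulrA (mulrC (S k j)) mulrA e.
  by rewrite mulrC mulrA -expr2 normrM (ger0_norm (sqr_ge0 _)) (Ssym PD j i).
have im : i != m by apply: contraNneq mi => ->.
have jm : j != m by apply: contraNneq mj => ->.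
have e1 := sepy i (comp_self k i) im.
have e2 := sepy j jc jm.
have nik : ~~ connect (rm G m) i k.
  rewrite (sym_connect_sym (rm_sym m Gsym)).
  exact: (uniq_nbr Gsym Girr Gac Gkm cim (connect0 _ i) im).
have lt : (#|comp m i| < #|comp k i|)%N.
  apply: proper_card; apply/properP; split.
    by apply/subsetP => z; rewrite !compE; apply: comp_mono.
  exists m; [by rewrite compE | by apply: comp_nk; rewrite eq_sym].
have [IHw _] := IH m i j (leq_trans lt cN) ij im jm.
have E0 : S i k * S k j * S m m ^+ 2 = S k m ^+ 2 * (S i m * S m j).
  rewrite (Ssym PD i k) (Ssym PD i m).
  transitivity ((S k i * S m m) * (S k j * S m m)); first by ring.
  by rewrite e1 e2; ring.
apply: (helper1 dm nij _ IHw skm).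
have := congr1 (fun x : R => `|x|) E0; rewrite normrM (normrM (S k m ^+ 2)) (ger0_norm (sqr_ge0 _)).
by rewrite (ger0_norm (sqr_ge0 _)).
Qed.

Lemma gqE k i j : valid k i j -> gq S k i j = `|S i k * S k j| / `|S i j|.
Proof. by move=> _; rewrite /gq normf_div. Qed.

Lemma g_le k i j : valid k i j -> gq S k i j <= S k k.
Proof.
move=> v; rewrite gqE //; move: (v) => /and3P[ij ik jk].
rewrite ler_pdivrMr ?normr_gt0 ?nz //.
by have [h _] := bound (ltnSn _) ij ik jk.
Qed.

Lemma g_sep k i j : valid k i j -> j \notin comp k i -> gq S k i j = S k k.
Proof.
move=> v jc; move: (v) => /and3P[ij ik jk].
rewrite /gq -(sepM ik jc) mulrAC divff ?nz // mul1r ger0_norm //; exact: ltW (Sdiag PD k).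
Qed.

Lemma g_lt k i j : valid k i j -> j \in comp k i -> gq S k i j < S k k.
Proof.
move=> v jc; rewrite gqE //; move: (v) => /and3P[ij ik jk].
rewrite ltr_pdivrMr ?normr_gt0 ?nz //.
by have [_ h] := bound (ltnSn _) ij ik jk; apply: h.
Qed.

Lemma gq_sym k i j : gq S k i j = gq S k j i.
Proof. by rewrite /gq (Ssym PD i k) (Ssym PD k j) (Ssym PD i j) (mulrC (S k i)). Qed.

Definition internal k := [exists p, exists q, valid k p q && (q \notin comp k p)].

Lemma leaf_nbr k z : ~~ internal k -> z != k -> exists2 b, G k b & forall y, G k y -> y = b.
Proof.
move=> ni zk; have [m Gmk _] := nbr_exists (Gconn z k) zk.
have Gkm : G k m by rewrite Gsym.
exists m => // y Gky; apply/eqP; apply: contraNT ni => ym.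
apply/existsP; exists m; apply/existsP; exists y.
have km : k != m by apply/eqP => e; move: Gkm; rewrite e Girr.
have ky : k != y by apply/eqP => e; move: Gky; rewrite e Girr.
rewrite /valid eq_sym ym eq_sym km eq_sym ky /=.
rewrite compE; apply/negP => c.
have := uniq_nbr Gsym Girr Gac Gkm (connect0 _ m) c ym.
by rewrite connect1 // /rm Gky km ym.
Qed.

Lemma leaf_comp k b : (forall y, G k y -> y = b) -> forall z, z \in comp b k -> z = k.
Proof.
move=> u z; rewrite compE => /connectP [[|y p] /=]; first by move=> _ ->.
by move=> /andP[/and3P[Gky _ yb]]; move: yb; rewrite (u y Gky) eqxx.
Qed.

Lemma leaf_sepM k b p : (forall y, G k y -> y = b) -> p != k -> p != b ->
  S p k * S b b = S p b * S b k.
Proof.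
move=> u pk pb; apply: sepM pb _; rewrite comp_sym; apply/negP => c.
by move: pk; rewrite (leaf_comp u c) eqxx.
Qed.

Lemma leaf_ineq k b : G k b -> (forall y, G k y -> y = b) -> `|S k b| < S b b.
Proof.
move=> Gkb u.
have lf : is_leaf G k.
  rewrite /is_leaf (_ : [set y | G k y] = [set b]) ?cards1 //.
  by apply/setP => y; rewrite !inE; apply/idP/eqP => [/u|->].
have := LC lf Gkb => lt.
have kb : k != b by apply/eqP => e; move: Gkb; rewrite e Girr.
have row : W k k * S k b + W k b * S b b = 0.
  have := WSe PD k b; rewrite (negbTE kb) (bigD1 k) //= (bigD1 b) 1?eq_sym //= big1 ?addr0 //.
  move=> c /andP[cb ck]; have : ~~ G k c by apply/negP => /u; apply/eqP.
  by rewrite /ci_graph (eq_sym k c) cb /= negbK => /eqP ->; rewrite mul0r.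
have wk := Wdiag PD k.
have db := Sdiag PD b.
have e : `|S k b| * W k k = `|W k b| * S b b.
  rewrite -[W k k]ger0_norm ?ltW // -[S b b]ger0_norm ?ltW // -!normrM mulrC.
  by move/eqP: row; rewrite addr_eq0 => /eqP ->; rewrite normrN.
rewrite -(ltr_pM2r wk) e mulrC ltr_pM2l //.
Qed.

Lemma leaf_g_eq k b q : G k b -> (forall y, G k y -> y = b) -> q != k -> q != b ->
  gq S k b q = S k b ^+ 2 / S b b.
Proof.
move=> Gkb u qk qb; have e := leaf_sepM u qk qb.
have db := Sdiag PD b.
have bq : S b q != 0 by apply: nz; rewrite eq_sym.
have eq : S k q = S q b * S b k / S b b by rewrite (Ssym PD k q) -e mulfK ?gt_eqF.
rewrite /gq eq (Ssym PD q b) (Ssym PD b k).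
have -> : S k b * (S b q * S k b / S b b) / S b q = S k b ^+ 2 / S b b.
  by field; rewrite bq gt_eqF.
by rewrite ger0_norm // divr_ge0 ?sqr_ge0 ?ltW.
Qed.

Lemma leaf_g k b p q : G k b -> (forall y, G k y -> y = b) -> valid k p q ->
  gq S k p q <= S k b ^+ 2 / S b b.
Proof.
move=> Gkb u v; move: (v) => /and3P[pq pk qk].
case: (eqVneq p b) => [e|pb]; first by subst b; rewrite leaf_g_eq // eq_sym.
case: (eqVneq q b) => [e|qb]; first by subst b; rewrite gq_sym leaf_g_eq.
have db := Sdiag PD b.
have e1 := leaf_sepM u pk pb.
have e2 := leaf_sepM u qk qb.
have vb : valid b p q by rewrite /valid pq pb qb.
have gb := g_le vb.
have E : gq S k p q = S k b ^+ 2 / S b b ^+ 2 * gq S b p q.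
  have pqn : S p q != 0 by apply: nz.
  have dn : S b b != 0 by rewrite gt_eqF.
  have ep : S p k = S p b * S b k / S b b by rewrite -e1 mulfK.
  have eq : S k q = S q b * S b k / S b b by rewrite (Ssym PD k q) -e2 mulfK.
  rewrite /gq ep eq -[S k b ^+ 2 / S b b ^+ 2]ger0_norm ?divr_ge0 ?sqr_ge0 ?exprn_ge0 ?ltW //.
  rewrite -normrM; congr `|_|; rewrite (Ssym PD b k) (Ssym PD q b); field.
  by rewrite pqn dn.
rewrite E.
have -> : S k b ^+ 2 / S b b = S k b ^+ 2 / S b b ^+ 2 * S b b.
  by field; rewrite gt_eqF.
by rewrite ler_wpM2l // divr_ge0 ?sqr_ge0 ?exprn_ge0 ?ltW.
Qed.

Lemma internal_max k : internal k -> IsMax S k (S k k).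
Proof.
move=> /existsP[p /existsP[q /andP[v s]]]; split; first by exists p, q; rewrite g_sep.
by move=> i j; apply: g_le.
Qed.

Lemma leaf_max k b z : G k b -> (forall y, G k y -> y = b) -> z != k -> z != b ->
  IsMax S k (S k b ^+ 2 / S b b).
Proof.
move=> Gkb u zk zb; split; last by move=> i j; apply: leaf_g.
have bk : b != k by apply/eqP => e; move: Gkb; rewrite e Girr.
exists b, z; split; last by rewrite leaf_g_eq.
by rewrite /valid eq_sym zb bk zk.
Qed.

Lemma not_internal_DL k i j : valid k i j -> ~~ internal k -> DL S k.
Proof.
move=> v ni; move: (v) => /and3P[ij ik jk].
have [b Gkb u] := leaf_nbr ni ik.
have bk : b != k by apply/eqP => e; move: Gkb; rewrite e Girr.
have [z zk zb] : exists2 z, z != k & z != b.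
  case: (eqVneq i b) => [ib|ib]; last by exists i.
  by exists j => //; rewrite -ib eq_sym.
have db := Sdiag PD b.
have ib : internal b.
  apply/existsP; exists k; apply/existsP; exists z.
  rewrite /valid eq_sym zk eq_sym bk zb /=; apply/negP => c.
  by move: zk; rewrite (leaf_comp u c) eqxx.
exists b; split => //; exists (S k b ^+ 2 / S b b), (S b b); split.
- exact: leaf_max zk zb.
- exact: internal_max.
- by rewrite mulfVK // gt_eqF.
have li := leaf_ineq Gkb u.
rewrite ltr_pdivrMr // -[S k b ^+ 2]ger0_norm ?sqr_ge0 // normrX expr2.
by apply: ltr_pM.
Qed.

Lemma internal_notDL k : internal k -> ~ DL S k.
Proof.
move=> ik [j [jk [x [y [Mx My xy xly]]]]].
have xe := IsMax_uniq Mx (internal_max ik); subst x.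
case: (boolP (internal j)) => ij.
  have ye := IsMax_uniq My (internal_max ij); subst y.
  have := S2x2 PD (ltac:(by rewrite eq_sym) : k != j).
  by rewrite xy ltxx.
have [c Gjc u] := leaf_nbr ij (ltac:(by rewrite eq_sym) : k != j).
have cj : c != j by apply/eqP => e; move: Gjc; rewrite e Girr.
have dc := Sdiag PD c.
have [[p [q [vpq ye]]] _] := My.
have yle : y <= S j c ^+ 2 / S c c by rewrite ye; apply: leaf_g.
case: (eqVneq c k) => [ck|ck].
  subst c.
  have li := leaf_ineq Gjc u.
  have : S j k ^+ 2 / S k k < S k k.
    rewrite ltr_pdivrMr // -[S j k ^+ 2]ger0_norm ?sqr_ge0 // normrX expr2.
    by apply: ltr_pM.
  by move=> h; move: (lt_trans (le_lt_trans yle h) xly); rewrite ltxx.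
have yge : S j c ^+ 2 / S c c <= y.
  have [_ hy] := My; rewrite -(leaf_g_eq (q := k) Gjc u) //.
  - by apply: hy; rewrite /valid ck cj /= eq_sym.
  - by rewrite eq_sym.
  - by rewrite eq_sym.
have yeq : y = S j c ^+ 2 / S c c by apply/le_anti; rewrite yle yge.
have kj : k != j by rewrite eq_sym.
have kc : k != c by rewrite eq_sym.
have e := leaf_sepM u kj kc.
have jcn : S j c ^+ 2 != 0 by rewrite expf_neq0 // nz // eq_sym.
have : S k k * S c c * S j c ^+ 2 = S k c ^+ 2 * S j c ^+ 2.
  transitivity ((S k k * y) * S c c ^+ 2).
    by rewrite yeq; field; rewrite gt_eqF.
  rewrite xy -exprMn e (Ssym PD c j); ring.
move/(mulIf jcn) => h.
have := S2x2 PD (ltac:(by rewrite eq_sym) : k != c).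
by rewrite h ltxx.
Qed.

Lemma sep_char k i j : valid k i j -> (j \notin comp k i) <-> (~ DL S k /\ Qm S k i j).
Proof.
move=> v; split.
  move=> s; have ik : internal k by apply/existsP; exists i; apply/existsP; exists j; rewrite v s.
  split; first exact: internal_notDL.
  by move=> p q w; rewrite (g_sep v s); apply: g_le w.
move=> [nd q]; case: (boolP (internal k)) => ik; last first.
  by case: nd; apply: not_internal_DL v ik.
move: (ik) => /existsP[p /existsP[r /andP[w s]]].
have := q p r w; rewrite g_sep // => h.
apply/negP => jc; have := g_lt v jc; by rewrite ltNge h.
Qed.

Lemma edge_char i j : G i j <-> (i != j /\ forall k, valid k i j -> j \in comp k i).
Proof.
split.
  move=> Gij; have ij : i != j by apply/eqP => e; move: Gij; rewrite e Girr.
  split => // k /and3P[_ ik jk]; rewrite compE; apply: connect1.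
  by rewrite /rm Gij ik jk.
move=> [ij h]; apply/negPn/negP => nG.
have [m Gmj cim] := nbr_exists (Gconn i j) ij.
have mi : m != i by apply/eqP => e; move: Gmj; rewrite e (negbTE nG).
have mj : m != j by apply/eqP => e; move: Gmj; rewrite e Girr.
have Gjm : G j m by rewrite Gsym.
have := uniq_nbr Gsym Girr Gac Gjm cim (connect0 _ i) (ltac:(by rewrite eq_sym)).
rewrite -compE -comp_sym => /negP; apply; apply: h.
by rewrite /valid ij (eq_sym i m) mi (eq_sym j m) mj.
Qed.

End Tree.

Section Inv.
Variable (R : realFieldType) (n : nat) (M1 M2 : 'M[R]_n).
Hypothesis h : forall a b, a != b -> M1 a b = M2 a b.

Lemma gq_inv k i j : valid k i j -> gq M1 k i j = gq M2 k i j.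
Proof.
move=> /and3P[ij ik jk]; rewrite /gq !h // eq_sym //.
Qed.

Lemma IsMax_inv k x : IsMax M1 k x -> IsMax M2 k x.
Proof.
move=> [[i [j [v ->]]] hm]; split; first by exists i, j; rewrite gq_inv.
by move=> p q w; rewrite -gq_inv //; apply: hm.
Qed.

Lemma DL_inv k : DL M1 k -> DL M2 k.
Proof.
move=> [j [jk [x [y [mx my xy xly]]]]]; exists j; split => //; exists x, y; split.
- exact: IsMax_inv.
- exact: IsMax_inv.
- by rewrite -h // eq_sym.
- done.
Qed.

Lemma Qm_inv k i j : valid k i j -> Qm M1 k i j -> Qm M2 k i j.
Proof. by move=> v q p r w; rewrite -!gq_inv //; apply: q. Qed.
End Inv.

Unset Implicit Arguments.
Theorem theorem4 (R : realFieldType) (n : nat)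
  (Sstar Dstar Sprime Dprime : 'M[R]_n) :
  posdef Sstar -> is_tree (ci_graph Sstar) -> leaf_condition Sstar ->
  nonneg_diag Dstar ->
  posdef Sprime -> is_tree (ci_graph Sprime) -> leaf_condition Sprime ->
  nonneg_diag Dprime ->
  Sstar + Dstar = Sprime + Dprime ->
  ci_graph Sprime =2 ci_graph Sstar.
Proof.
move=> P1 T1 L1 D1 P2 T2 L2 D2 E.
have off : forall a b, a != b -> Sprime a b = Sstar a b.
  move=> a b ab; have := congr1 (fun M : 'M[R]_n => M a b) E; rewrite !mxE.
  by rewrite (is_diag_mxP D1.1 a b ab) (is_diag_mxP D2.1 a b ab) !addr0 => ->.
have off' : forall a b, a != b -> Sstar a b = Sprime a b by move=> a b ab; rewrite off.
have key : forall k i j, valid k i j -> (j \in comp Sprime k i) = (j \in comp Sstar k i).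
  move=> k i j v; apply: negb_inj; apply/idP/idP => hh.
    apply/(sep_char P1 T1 L1 v); have [nd q] := (sep_char P2 T2 L2 v).1 hh.
    by split; [move=> d; apply: nd; apply: DL_inv d | apply: Qm_inv q].
  apply/(sep_char P2 T2 L2 v); have [nd q] := (sep_char P1 T1 L1 v).1 hh.
  by split; [move=> d; apply: nd; apply: DL_inv d | apply: Qm_inv q].
move=> i j; apply/idP/idP.
  move=> /(edge_char P2 T2) [ij hk]; apply/(edge_char P1 T1); split => // k v.
  by rewrite -key // hk.
move=> /(edge_char P1 T1) [ij hk]; apply/(edge_char P2 T2); split => // k v.
by rewrite key // hk.
Qed.
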